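(* Suppose the e-values are valid, i.e. $\mathbb{E}[e_t\mid\mathcal{F}_{t-1}]\le 1$ almost surely for every $t$ with $\theta_t=0$. Define the oracle e-value-based FDP estimate $$\mathrm{FDP}^*_{\mathrm{e}}(t)=\sum_{j\in\mathcal{H}_0(t)}\frac{\alpha_j}{R_{j-1}+1}.$$ Then for every $t\ge1$: if $\mathbb{E}[\mathrm{FDP}^*_{\mathrm{e}}(t)]\le\alpha$, then $\mathrm{FDR}(t)\le\alpha$.
   Context: Let $\alpha\in(0,1)$ be a target level. Hypotheses are indexed by $t=1,2,\dots$; $\theta_t\in\{0,1\}$ is a fixed (non-random) indicator with $\theta_t=0$ iff the $t$-th null hypothesis is true. $e_1,e_2,\dots$ are nonnegative random variables (e-values). Testing levels $\alpha_1,\alpha_2,\dots$ are nonnegative random variables and the decisions are $\delta_t=\mathbb{1}\{e_t\ge 1/\alpha_t\}$ (with $\delta_t=0$ when $\alpha_t=0$). Let $\mathcal{F}_t=\sigma(\delta_1,\dots,\delta_t)$, $\mathcal{F}_0$ trivial; each $\alpha_t$ is required to be $\mathcal{F}_{t-1}$-measurable. $R_t=\sum_{j=1}^t\delta_j$, $R_0=0$. $\mathcal{H}_0(t)=\{j\le t:\theta_j=0\}$. $\mathrm{FDR}(t)=\mathbb{E}\big[\sum_{j\in\mathcal{H}_0(t)}\delta_j/(R_t\vee 1)\big]$. *)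

(* Defs.v *)
From HB Require Import structures.
From mathcomp Require Import all_boot all_order all_algebra.
From mathcomp Require Import all_classical all_reals all_analysis.
Set Implicit Arguments. Unset Strict Implicit. Unset Printing Implicit Defensive.
Import Order.TTheory GRing.Theory Num.Theory.
Local Open Scope classical_set_scope.
Local Open Scope ring_scope.

Section OnlineFDR.
Context {d : measure_display} {T : measurableType d} {R : realType}.

Definition decision (e alpha : nat -> T -> R) (t : nat) (x : T) : bool :=
  (0 < alpha t x) && ((alpha t x)^-1 <= e t x).

Definition nrej (e alpha : nat -> T -> R) (t : nat) (x : T) : R :=
  \sum_(1 <= j < t.+1) (decision e alpha j x)%:R.

Definition filt (e alpha : nat -> T -> R) (t : nat) : set (set T) :=
  <<s [set A | exists j : nat, [/\ (1 <= j)%N, (j <= t)%N &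
                 A = [set x | decision e alpha j x]]] >>.

Definition measurable_wrt (G : set (set T)) (f : T -> R) : Prop :=
  forall B : set R, measurable B -> G (f @^-1` B).

(* "E[X | G] <= 1 a.s." for a nonnegative X: there is a version Y of the
   conditional expectation of X given G (G-measurable, nonnegative, with
   int_A X dP = int_A Y dP for every A in G) such that Y <= 1 P-a.s. *)
Definition condexp_le1 (P : probability T R) (G : set (set T)) (X : T -> R) :
  Prop :=
  exists Y : T -> R,
    [/\ measurable_wrt G Y, (forall x, 0 <= Y x),
        (forall A, G A -> (\int[P]_(x in A) (X x)%:E =
                           \int[P]_(x in A) (Y x)%:E)%E) &
        {ae P, forall x, Y x <= 1}].

Definition nfalse (theta : nat -> bool) (e alpha : nat -> T -> R) (t : nat)
  (x : T) : R :=
  \sum_(1 <= j < t.+1 | ~~ theta j) (decision e alpha j x)%:R.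

Definition FDP (theta : nat -> bool) (e alpha : nat -> T -> R) (t : nat)
  (x : T) : R :=
  nfalse theta e alpha t x / Num.max (nrej e alpha t x) 1.

Definition FDR (P : probability T R) (theta : nat -> bool)
  (e alpha : nat -> T -> R) (t : nat) : \bar R :=
  (\int[P]_x (FDP theta e alpha t x)%:E)%E.

Definition FDPstar_e (theta : nat -> bool) (e alpha : nat -> T -> R) (t : nat)
  (x : T) : R :=
  \sum_(1 <= j < t.+1 | ~~ theta j) alpha j x / (nrej e alpha j.-1 x + 1).

End OnlineFDR.

(* Main.v *)
Require Import Defs.
From HB Require Import structures.
From mathcomp Require Import all_boot all_order all_algebra.
From mathcomp Require Import all_classical all_reals all_analysis.
From mathcomp Require Import measurable_realfun.
Import Order.TTheory GRing.Theory Num.Theory.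
Local Open Scope classical_set_scope.
Local Open Scope ring_scope.
Set Implicit Arguments. Unset Strict Implicit.

Section Aux.
Context {d : measure_display} {T : measurableType d} {R : realType}.

Lemma inv_ge1_meas (h : T -> R) : measurable_fun setT h -> (forall x, 1 <= h x) ->
  measurable_fun setT (fun x => (h x)^-1).
Proof.
move=> mh h1.
have -> : (fun x => (h x)^-1) = (fun y : R => (Num.max y 1)^-1) \o h.
  apply/funext => x /=; congr (_^-1); apply/esym/max_idPl; exact: h1.
apply: measurableT_comp => //; apply: nonincreasing_measurable => // x y xy.
have hx : 0 < Num.max x 1 by rewrite lt_max ltr01 orbT.
have hy : 0 < Num.max y 1 by rewrite lt_max ltr01 orbT.
rewrite lef_pV2 ?posrE //.
by rewrite ge_max !le_max xy lexx !orbT.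
Qed.

Lemma msum (s : seq nat) (h : nat -> T -> R) :
  (forall i, i \in s -> measurable_fun setT (h i)) ->
  measurable_fun setT (fun x => \sum_(i <- s) h i x).
Proof.
elim: s => [|a s IH] hm.
  under eq_fun do rewrite big_nil; exact: measurable_cst.
under eq_fun do rewrite big_cons.
apply: measurable_funD; first by apply: hm; rewrite inE eqxx.
by apply: IH => i iS; apply: hm; rewrite inE iS orbT.
Qed.

Lemma bool_natR_meas : measurable_fun (setT : set bool) (fun b : bool => (b%:R : R)).
Proof. by move=> _ Y _. Qed.

End Aux.

Lemma bigI_mem {T : Type} {I : eqType} (s : seq I) (F : I -> set T) x :
  (\big[setI/setT]_(i <- s) F i) x <-> (forall i, i \in s -> F i x).
Proof.
elim: s => [|a s IH]; first by rewrite big_nil; split.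
rewrite big_cons; split.
  by move=> [Fa /IH H] i; rewrite inE => /orP[/eqP->|/H].
move=> H; split; first by apply: H; rewrite inE eqxx.
by apply/IH => i iS; apply: H; rewrite inE iS orbT.
Qed.

Lemma bigU_mem {T : Type} {I : eqType} (s : seq I) (F : I -> set T) x :
  (\big[setU/set0]_(i <- s) F i) x <-> (exists i, i \in s /\ F i x).
Proof.
elim: s => [|a s IH]; first by rewrite big_nil; split => // -[i []].
rewrite big_cons; split.
  move=> [Fa|/IH [i [iS Fi]]]; first by exists a; rewrite inE eqxx.
  by exists i; rewrite inE iS orbT.
move=> [i []]; rewrite inE => /orP[/eqP-> Fa|iS Fi]; first by left.
by right; apply/IH; exists i.
Qed.

Section Infra.
Context {d : measure_display} {T : measurableType d} {R : realType}.
Variables (e alpha : nat -> T -> R).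
Hypothesis he : forall t, measurable_fun setT (e t).
Hypothesis halphaG : forall t, (1 <= t)%N -> measurable_wrt (filt e alpha t.-1) (alpha t).

Local Notation dec := (decision e alpha).

Definition gens (n : nat) : set (set T) :=
  [set A | exists j : nat, [/\ (1 <= j)%N, (j <= n)%N &
                 A = [set x | dec j x]]].

Lemma filtE n : filt e alpha n = <<s gens n >>.
Proof. by []. Qed.

Lemma dec_alt j x : dec j x = (0 < alpha j x) && (1 <= alpha j x * e j x).
Proof.
rewrite /decision; have [a0|] := ltP 0 (alpha j x) => //=.
by rewrite -[(alpha j x)^-1]mulr1 ler_pdivrMl.
Qed.

Lemma meas_all j : (1 <= j)%N ->
  measurable [set x | dec j x] /\ measurable_fun setT (alpha j).
Proof.
elim/ltn_ind: j => j IH j1.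
have gsub : gens j.-1 `<=` measurable.
  move=> A [i [i1 ij ->]]; apply: (proj1 (IH i _ i1)).
  by case: j IH j1 ij => // j _ _ /=.
have Gsub : filt e alpha j.-1 `<=` measurable.
  rewrite filtE; apply: smallest_sub gsub; exact: sigma_algebra_measurable.
have ma : measurable_fun setT (alpha j).
  by move=> _ B mB; rewrite setTI; apply: Gsub; apply: halphaG.
split => //.
have md : measurable_fun setT (fun x => dec j x).
  rewrite (_ : (fun x => dec j x) = (fun x => (0 < alpha j x) && (1 <= alpha j x * e j x))).
    apply: measurable_and; first exact: measurable_fun_ltr.
    by apply: measurable_fun_ler => //; exact: measurable_funM.
  by apply/funext => x; rewrite dec_alt.
by have := md measurableT [set true] I; rewrite setTI.
Qed.

Lemma filt_meas n : filt e alpha n `<=` measurable.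
Proof.
rewrite filtE; apply: smallest_sub; first exact: sigma_algebra_measurable.
by move=> A [i [i1 ij ->]]; exact: (proj1 (meas_all i1)).
Qed.

Lemma wrt_meas n (f : T -> R) : measurable_wrt (filt e alpha n) f -> measurable_fun setT f.
Proof. by move=> hf _ B mB; rewrite setTI; apply: filt_meas; apply: hf. Qed.

Lemma alpha_meas j : (1 <= j)%N -> measurable_fun setT (alpha j).
Proof. by move=> j1; case: (meas_all j1). Qed.

Lemma decR_meas j : (1 <= j)%N -> measurable_fun setT (fun x => ((dec j x)%:R : R)).
Proof.
move=> j1; apply: (measurableT_comp bool_natR_meas).
apply: (measurable_fun_bool true); rewrite setTI; exact: (proj1 (meas_all j1)).
Qed.

Lemma nrej_meas n : measurable_fun setT (nrej e alpha n).
Proof.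
apply: msum => i; rewrite mem_index_iota => /andP[i1 _]; exact: decR_meas.
Qed.

Definition same n (x y : T) := forall i, (1 <= i <= n)%N -> dec i x = dec i y.

Lemma filt_sat n A : filt e alpha n A -> forall x y, same n x y -> A x -> A y.
Proof.
move=> FA; pose C := [set B : set T | forall x y, same n x y -> B x -> B y].
suff : <<s gens n >> `<=` C by move=> /(_ A FA).
apply: smallest_sub.
  split.
  - by move=> x y.
  - move=> B CB x y s [_ nBx]; split => // By; apply: nBx.
    by apply: (CB y x) => // i hi; rewrite s.
  - by move=> F CF x y s [k _ Fkx]; exists k => //; apply: (CF k x).
move=> B [i [i1 ij ->]] x y s /=; rewrite s //; exact/andP.
Qed.

Lemma wrt_sat n (f : T -> R) : measurable_wrt (filt e alpha n) f ->
  forall x y, same n x y -> f x = f y.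
Proof.
move=> hf x y s.
have := filt_sat (hf [set f x] (measurable_set1 _)) s.
by move=> /(_ erefl) ->.
Qed.

Lemma nrej_sat n x y : same n x y -> nrej e alpha n x = nrej e alpha n y.
Proof.
move=> s; rewrite /nrej; apply: eq_big_nat => i /andP[i1 iS].
by rewrite s // i1 -ltnS.
Qed.

End Infra.

Lemma mEF {d : measure_display} {T : measurableType d} {R : realType}
  (A : set T) (f : T -> R) :
  measurable A -> measurable_fun setT f -> measurable_fun A (fun x => (f x)%:E).
Proof.
move=> mA mf; apply/measurable_EFinP; exact: measurable_funS mf.
Qed.

Section Main.
Context {d : measure_display} {T : measurableType d} {R : realType}.
Variables (P : probability T R) (e alpha : nat -> T -> R).
Hypothesis he : forall t, measurable_fun setT (e t).
Hypothesis he0 : forall t x, 0 <= e t x.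
Hypothesis ha0 : forall t x, 0 <= alpha t x.
Hypothesis halphaG : forall t, (1 <= t)%N -> measurable_wrt (filt e alpha t.-1) (alpha t).

Local Notation dec := (decision e alpha).

Lemma nrej_ge0 n x : 0 <= nrej e alpha n x.
Proof. by apply: sumr_ge0 => i _; rewrite ler0n. Qed.

Section Atoms.
Variable n : nat.

Definition Vec (x : T) : {ffun 'I_n -> bool} := [ffun i : 'I_n => dec i.+1 x].
Definition Atom (v : {ffun 'I_n -> bool}) : set T := [set x | Vec x = v].

Lemma Vec_same x y : Vec x = Vec y -> same e alpha n x y.
Proof.
move=> h i /andP[i1 iN]; case: i i1 iN => // k _ kN.
by have := congr1 (fun f : {ffun 'I_n -> bool} => f (Ordinal kN)) h; rewrite !ffunE.
Qed.

Lemma atom_filt v : filt e alpha n (Atom v).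
Proof.
have -> : Atom v = \big[setI/setT]_(i <- enum 'I_n) [set x | dec i.+1 x = v i].
  apply/seteqP; split => x.
  - by move=> /= hv; apply/bigI_mem => i _ /=; rewrite -hv ffunE.
  - move=> /bigI_mem h /=; apply/ffunP => i; rewrite ffunE.
    by apply: h; rewrite mem_enum.
pose GT := g_sigma_algebraType (gens e alpha n).
suff : @measurable _ GT (\big[setI/setT]_(i <- enum 'I_n) [set x | dec i.+1 x = v i]) by [].
apply: bigsetI_measurable => i _.
have gi : @measurable _ GT [set x | dec i.+1 x].
  apply: sub_gen_smallest; exists i.+1; split => //; exact: ltn_ord.
case: (v i).
- by [].
- have -> : [set x : GT | dec i.+1 x = false] = ~` [set x | dec i.+1 x].
    by apply/seteqP; split => x /=; case: (dec i.+1 x).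
  exact: measurableC.
Qed.

Lemma atom_meas v : measurable (Atom v).
Proof. exact: (filt_meas he halphaG (atom_filt v)). Qed.

Lemma integral_atoms (f : T -> \bar R) : measurable_fun setT f -> (forall x, 0 <= f x)%E ->
  (\int[P]_x f x = \sum_(v <- enum {ffun 'I_n -> bool}) \int[P]_(x in Atom v) f x)%E.
Proof.
move=> mf f0.
have hD : \big[setU/set0]_(v <- enum {ffun 'I_n -> bool}) Atom v = setT.
  apply/seteqP; split => // x _; apply/bigU_mem; exists (Vec x).
  by rewrite mem_enum.
have triv : trivIset [set` enum {ffun 'I_n -> bool}] Atom.
  by move=> v w _ _ [x [/= hv hw]]; rewrite -hv -hw.
have := ge0_integral_bigsetU P atom_meas (enum_uniq _) triv.
by rewrite /= hD; apply.
Qed.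

End Atoms.

Lemma per_j j : (1 <= j)%N -> condexp_le1 P (filt e alpha j.-1) (e j) ->
  (\int[P]_x (alpha j x * e j x / (nrej e alpha j.-1 x + 1))%:E <=
   \int[P]_x (alpha j x / (nrej e alpha j.-1 x + 1))%:E)%E.
Proof.
move=> j1 [Y [mYG Y0 hY Y1]].
set n := j.-1.
pose Z x := alpha j x / (nrej e alpha n x + 1).
have Zsat : forall x y, same e alpha n x y -> Z x = Z y.
  move=> x y s; rewrite /Z (wrt_sat (halphaG j1) s) (nrej_sat s) //.
have Z0 : forall x, 0 <= Z x.
  by move=> x; apply: divr_ge0 => //; apply: addr_ge0 => //; exact: nrej_ge0.
have mZ : measurable_fun setT Z.
  apply: measurable_funM; first exact: (alpha_meas he halphaG j1).
  apply: inv_ge1_meas; first by apply: measurable_funD => //; exact: nrej_meas.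
  by move=> x /=; rewrite -{1}(add0r 1) lerD2r nrej_ge0.
have mY : measurable_fun setT Y by exact: (wrt_meas he halphaG mYG).
rewrite (eq_integral (fun x => (Z x * e j x)%:E)); last first.
  by move=> x _; rewrite /Z mulrAC.
rewrite [leLHS](integral_atoms n); last 2 first.
- by apply: mEF => //; exact: measurable_funM.
- by move=> x; rewrite lee_fin; exact: mulr_ge0 (Z0 x) (he0 j x).
rewrite [leRHS](integral_atoms n); last 2 first.
- by apply: mEF.
- by move=> x; rewrite lee_fin; exact: Z0.
apply: lee_sum => v _.
have mA := @atom_meas n v.
have [[x0 Ax0]|nA] := pselect (exists x, Atom v x); last first.
  have -> : Atom v = set0.
    by apply/seteqP; split => // x Ax; apply: nA; exists x.
  by rewrite !integral_set0.
have ZA : forall x, Atom v x -> Z x = Z x0.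
  by move=> x Ax; apply: Zsat; apply: Vec_same; rewrite Ax Ax0.
rewrite (eq_integral (fun x => (Z x0)%:E * (e j x)%:E)%E); last first.
  by move=> x; rewrite inE => Ax; rewrite (ZA x Ax) EFinM.
rewrite [leRHS](eq_integral (fun x => (Z x0)%:E * (cst 1 x)%:E)%E); last first.
  by move=> x; rewrite inE => Ax; move: (ZA x Ax); rewrite /Z => ->; rewrite /= -EFinM mulr1.
have e0' : forall x, Atom v x -> (0 <= (e j x)%:E)%E by move=> x _; rewrite lee_fin.
have c0' : forall x, Atom v x -> (0 <= (cst 1 x : R)%:E)%E by move=> x _; rewrite lee_fin.
rewrite (ge0_integralZl_EFin P mA e0' (mEF mA (he j)) (Z0 x0)).
rewrite (ge0_integralZl_EFin P mA c0' (mEF mA (measurable_cst _)) (Z0 x0)).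
apply: lee_wpmul2l; first by rewrite lee_fin.
rewrite (hY (Atom v)); last exact: atom_filt.
apply: ae_ge0_le_integral => //.
all: try by move=> x _; rewrite lee_fin.
all: try exact: mEF.
by apply: filterS Y1 => x Yx _ /=; rewrite lee_fin.
Qed.

End Main.

Section Arith.
Context {d : measure_display} {T : measurableType d} {R : realType}.
Variables (e alpha : nat -> T -> R).

Lemma nrej_step j x : (1 <= j)%N ->
  nrej e alpha j x = nrej e alpha j.-1 x + (decision e alpha j x)%:R.
Proof. by case: j => // k _; rewrite /nrej big_nat_recr. Qed.

Lemma nrej_mono m n x : (m <= n)%N -> nrej e alpha m x <= nrej e alpha n x.
Proof.
move=> mn; rewrite /nrej (@big_cat_nat _ _ _ m.+1 1 n.+1) //=.
by rewrite lerDl; apply: sumr_ge0 => i _; rewrite ler0n.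
Qed.

End Arith.

Theorem theorem1 (d : measure_display) (T : measurableType d) (R : realType)
  (P : probability T R) (a : R) (theta : nat -> bool)
  (e alpha : nat -> T -> R) :
  0 < a -> a < 1 ->
  (forall t, measurable_fun setT (e t)) ->
  (forall t x, 0 <= e t x) ->
  (forall t x, 0 <= alpha t x) ->
  (forall t, (1 <= t)%N -> measurable_wrt (filt e alpha t.-1) (alpha t)) ->
  (forall t, (1 <= t)%N -> ~~ theta t ->
     condexp_le1 P (filt e alpha t.-1) (e t)) ->
  forall t, (1 <= t)%N ->
    (\int[P]_x (FDPstar_e theta e alpha t x)%:E <= a%:E)%E ->
    (FDR P theta e alpha t <= a%:E)%E.
Proof.
move=> _ _ he he0 ha0 haG hce t t1 hstar.
set s := [seq j <- index_iota 1 t.+1 | ~~ theta j].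
have sP : forall j, j \in s -> (1 <= j)%N /\ ~~ theta j /\ (j <= t)%N.
  by move=> j; rewrite mem_filter mem_index_iota => /andP[-> /andP[-> ]].
pose W j := if (1 <= j)%N then (fun x => alpha j x * e j x / (nrej e alpha j.-1 x + 1))
            else (fun _ => 0).
pose Z j := if (1 <= j)%N then (fun x => alpha j x / (nrej e alpha j.-1 x + 1))
            else (fun _ => 0).
have dinv : forall j, measurable_fun setT (fun x => (nrej e alpha j x + 1)^-1).
  move=> j; apply: inv_ge1_meas; first by apply: measurable_funD => //; exact: nrej_meas.
  by move=> x /=; rewrite -{1}(add0r 1) lerD2r nrej_ge0.
have dinv0 : forall j x, 0 <= (nrej e alpha j x + 1)^-1.
  by move=> j x; rewrite invr_ge0 addr_ge0 // nrej_ge0.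
have mW : forall j, measurable_fun setT (W j).
  move=> j; rewrite /W; case: ifP => j1; last exact: measurable_cst.
  apply: measurable_funM; last exact: dinv.
  by apply: measurable_funM => //; exact: (alpha_meas he haG j1).
have mZ : forall j, measurable_fun setT (Z j).
  move=> j; rewrite /Z; case: ifP => j1; last exact: measurable_cst.
  by apply: measurable_funM; [exact: (alpha_meas he haG j1)|exact: dinv].
have W0 : forall j x, 0 <= W j x.
  move=> j x; rewrite /W; case: ifP => // _.
  by rewrite mulr_ge0 // mulr_ge0.
have Z0 : forall j x, 0 <= Z j x.
  by move=> j x; rewrite /Z; case: ifP => // _; rewrite mulr_ge0.
have nfE : forall x, nfalse theta e alpha t x = \sum_(j <- s) (decision e alpha j x)%:R.
  by move=> x; rewrite /nfalse big_filter.
have mFDP : measurable_fun setT (FDP theta e alpha t).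
  apply: measurable_funM.
    rewrite (_ : nfalse theta e alpha t = fun x => \sum_(j <- s) (decision e alpha j x)%:R).
      by apply: msum => j /sP [j1 _]; exact: decR_meas.
    by apply/funext => x; rewrite nfE.
  apply: inv_ge1_meas.
    by apply: measurable_maxr => //; exact: nrej_meas.
  by move=> x /=; rewrite le_max lexx orbT.
have FDP0 : forall x, 0 <= FDP theta e alpha t x.
  move=> x; apply: divr_ge0; first by apply: sumr_ge0 => i _; rewrite ler0n.
  by rewrite le_max ler01 orbT.
have pw : forall x, FDP theta e alpha t x <= \sum_(j <- s) W j x.
  move=> x; rewrite /FDP nfE mulr_suml !big_seq; apply: ler_sum => j /sP [j1 [_ jt]].
  rewrite /W j1; case hd: (decision e alpha j x); last first.
    by rewrite mul0r mulr_ge0 // mulr_ge0.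
  rewrite mul1r.
  move: (hd); rewrite dec_alt => /andP[ap hae].
  have hR : nrej e alpha j.-1 x + 1 <= Num.max (nrej e alpha t x) 1.
    rewrite le_max; apply/orP; left.
    apply: (le_trans _ (nrej_mono e alpha x jt)).
    by rewrite (@nrej_step _ _ _ e alpha j x j1) hd.
  have p1 : 0 < nrej e alpha j.-1 x + 1 by rewrite ltr_wpDl // nrej_ge0.
  apply: (le_trans (y := (nrej e alpha j.-1 x + 1)^-1)).
    by rewrite lef_pV2 ?posrE // (lt_le_trans p1 hR).
  by rewrite ler_peMl // ltW // invr_gt0.
rewrite /FDR.
apply: (le_trans (y := (\int[P]_x (\sum_(j <- s) W j x)%:E)%E)).
  apply: ge0_le_integral => //.
  - by move=> x _; rewrite lee_fin.
  - exact: mEF.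
  - by apply: mEF => //; exact: msum.
  - by move=> x _; rewrite lee_fin.
apply: le_trans hstar.
have sumI : forall F : nat -> T -> R, (forall j, measurable_fun setT (F j)) ->
    (forall j x, 0 <= F j x) ->
    (\int[P]_x (\sum_(j <- s) F j x)%:E = \sum_(j <- s) \int[P]_x (F j x)%:E)%E.
  move=> F mF F0; under eq_integral => x _ do rewrite -sumEFin.
  apply: ge0_integral_sum => //.
  - by move=> j; exact: mEF.
  - by move=> j x _; rewrite lee_fin.
rewrite sumI //.
have -> : (\int[P]_x (FDPstar_e theta e alpha t x)%:E = \int[P]_x (\sum_(j <- s) Z j x)%:E)%E.
  apply: eq_integral => x _; congr (_%:E).
  rewrite /FDPstar_e -big_filter; apply: eq_big_seq => j /sP [j1 _].
  by rewrite /Z j1.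
rewrite sumI // !big_seq; apply: lee_sum => j /sP [j1 [nth _]].
rewrite /W /Z j1; exact: (per_j he he0 ha0 haG j1 (hce j j1 nth)).
Qed.
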